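(* Let $k$ be an algebraically closed field and $\Lambda=kQ/I$ ($Q$ finite quiver, $I$ admissible ideal) satisfy condition (C) below with $n$ vertices. Then: (1) for every arrow $\alpha:i\to j$ of $Q^{\circ}$, $e_i(\operatorname{rad}\Lambda)\alpha=\alpha(\operatorname{rad}\Lambda)e_j$; (2) for vertices $i,j$ and $w\in e_i\Lambda e_j$, there exist a unique $a\in k$ and some (not necessarily unique) $l\in e_i(\operatorname{rad}\Lambda)e_i$ with $w=(ae_i+l)w^i_j$ in $\Lambda$; also there exist a unique $a'\in k$ and some $l'\in e_j(\operatorname{rad}\Lambda)e_j$ with $w=w^i_j(a'e_j+l')$; moreover $a=a'$; (3) let $f\in\operatorname{Hom}_\Lambda(P_j,P_i)$ be given by left multiplication by $w=(ae_i+l)w^i_j$ with $a\neq 0$ and $l\in e_i(\operatorname{rad}\Lambda)e_i$, and let $V\subseteq Q_0$. Then $f$ factors through $\bigoplus_{t\in V}P_t$ if and only if the path $w^j_i$ passes through some vertex $t\in V$.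
   Context: Condition (C): (a) the quiver $Q^{\circ}$ obtained from $Q$ by deleting all loops is isomorphic to the quiver with vertices $1,\dots,n$ having exactly one arrow $i\to i+1$ and one arrow $i+1\to i$ for each $1\le i\le n-1$, and no others; (b) for every arrow $x:i\to j$ of $Q$ with $i\ne j$, $x\Lambda e_j=e_i\Lambda e_j=e_i\Lambda x$; (c) for every pair $(i,j)$ of vertices, $w^i_j\ne0$ in $\Lambda$, where $w^i_j$ is the shortest path from $i$ to $j$ in $Q$ (so $w^i_j\in e_i\Lambda e_j$; paths are composed left to right, $\alpha\beta$ = first $\alpha$ then $\beta$). $P_i=e_i\Lambda$ (right modules); a morphism $P_j\to P_i$ ''given by $w\in e_i\Lambda e_j$'' sends $e_j\lambda\mapsto w\lambda$. A path ''passes through'' a vertex $t$ if $t$ is one of its vertices, endpoints included. *)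

(* Defs.v *)
From HB Require Import structures.
From mathcomp Require Import all_boot all_order all_algebra.

Set Implicit Arguments.
Unset Strict Implicit.
Unset Printing Implicit Defensive.

Import GRing.Theory.
Local Open Scope ring_scope.

(* (v, [::]) is the trivial path e_v; arrows are composed left to      *)
(* right: a :: b :: ... means "first a, then b, ...".                  *)
Section Quiver.
Variables (Q0 Q1 : finType) (src tgt : Q1 -> Q0).

Definition qpath := (Q0 * seq Q1)%type.

Definition is_qpath (p : qpath) : bool :=
  if p.2 is a :: s then (src a == p.1) && path (fun a b => tgt a == src b) a s
  else true.

Definition qpath_end (p : qpath) : Q0 :=
  if p.2 is a :: s then tgt (last a s) else p.1.

Definition qpath_vertices (p : qpath) : seq Q0 := p.1 :: map tgt p.2.

Definition is_qpath_from_to (p : qpath) (i j : Q0) : bool :=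
  [&& is_qpath p, p.1 == i & qpath_end p == j].

Definition shortest_qpath (p : qpath) (i j : Q0) : Prop :=
  is_qpath_from_to p i j /\
  forall q, is_qpath_from_to q i j -> (size p.2 <= size q.2)%N.

(* The "double linear" quiver with vertices 0..n-1 (standing for 1..n):
   arrows are pairs (i, b), i < n-1; (i,true) : i -> i+1 and
   (i,false) : i+1 -> i. *)
Definition stdA_src n (b : 'I_n.-1 * bool) : nat :=
  if b.2 then val b.1 else (val b.1).+1.
Definition stdA_tgt n (b : 'I_n.-1 * bool) : nat :=
  if b.2 then (val b.1).+1 else val b.1.

(* Condition (C)(a): the quiver Q° obtained from Q by deleting all loops
   is isomorphic to the double linear quiver on n vertices: a bijection
   on vertices and a bijection on (non-loop) arrows compatible with
   sources and targets. *)
Definition loopless_iso_std (n : nat) : Prop :=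
  exists (sigma : Q0 -> 'I_n)
         (tau : {a : Q1 | src a != tgt a} -> ('I_n.-1 * bool)%type),
    bijective sigma /\ bijective tau /\
    forall a, val (sigma (src (val a))) = stdA_src (tau a) /\
              val (sigma (tgt (val a))) = stdA_tgt (tau a).

End Quiver.

Section Jacobson.
Variable L : pzRingType.

Definition right_ideal (M : L -> Prop) : Prop :=
  M 0 /\ (forall u v, M u -> M v -> M (u + v)) /\
  (forall u r, M u -> M (u * r)).

Definition maximal_right_ideal (M : L -> Prop) : Prop :=
  right_ideal M /\ ~ M 1 /\
  forall N, right_ideal N -> (forall u, M u -> N u) ->
    (forall u, N u -> M u) \/ N 1.

Definition jacobson_rad (r : L) : Prop :=
  forall M, maximal_right_ideal M -> M r.

End Jacobson.

(* We describe Lambda = kQ/I through the canonical algebra map          *)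
(*   phi : kQ -> L,  e_v |-> e v,  a |-> x a                            *)
(* (well defined by the universal property of path algebras exactly     *)
(* when the relations in [is_presentation] hold). L is then kQ/I with   *)
(* I = ker phi, iff phi is surjective; I is admissible iff              *)
(* R^m <= I <= R^2 for some m >= 2 (R = arrow ideal).                   *)
(* Elements of kQ are represented by finite formal combinations         *)
(* (list of (coefficient, path)).                                       *)
Section BoundQuiverAlgebra.
Variables (k : fieldType) (L : algType k).
Variables (Q0 Q1 : finType) (src tgt : Q1 -> Q0).
Variables (e : Q0 -> L) (x : Q1 -> L).

Definition path_img (p : qpath Q0 Q1) : L := e p.1 * \prod_(a <- p.2) x a.

Definition comb_val (c : seq (k * qpath Q0 Q1)) : L :=
  \sum_(cp <- c) cp.1 *: path_img cp.2.

Definition comb_coef (c : seq (k * qpath Q0 Q1)) (p : qpath Q0 Q1) : k :=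
  \sum_(cp <- c | cp.2 == p) cp.1.

Definition valid_comb (c : seq (k * qpath Q0 Q1)) : bool :=
  all (fun cp => is_qpath src tgt cp.2) c.

(* phi : kQ -> L is a well-defined surjective algebra morphism *)
Definition is_presentation : Prop :=
  (forall t u, e t * e u = if t == u then e t else 0) /\
  \sum_t e t = 1 /\
  (forall a, x a = e (src a) * x a * e (tgt a)) /\
  (forall y : L, exists c, valid_comb c /\ y = comb_val c).

(* its kernel I is admissible: R^m <= I <= R^2 for some m >= 2 *)
Definition admissible_kernel : Prop :=
  (exists m, (2 <= m)%N /\
     forall p, is_qpath src tgt p -> (m <= size p.2)%N -> path_img p = 0) /\
  (forall c, valid_comb c -> comb_val c = 0 ->
     forall p, is_qpath src tgt p -> (size p.2 <= 1)%N -> comb_coef c p = 0).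

Definition cond_C (n : nat) : Prop :=
  loopless_iso_std src tgt n /\
  (forall a, src a != tgt a ->
     (forall y, (exists l, y = x a * l * e (tgt a)) <->
                (exists l, y = e (src a) * l * e (tgt a))) /\
     (forall y, (exists l, y = e (src a) * l * e (tgt a)) <->
                (exists l, y = e (src a) * l * x a))) /\
  (forall i j p, shortest_qpath src tgt p i j -> path_img p != 0).

Definition in_corner_rad (i : Q0) (l : L) : Prop :=
  exists r, jacobson_rad r /\ l = e i * r * e i.

Definition proj_mod (i : Q0) (y : L) : Prop := exists l, y = e i * l.

(* (+)_{t in S} P_t, realized as tuples (y_t)_t with y_t in P_t for
   t in S and y_t = 0 for t not in S, with componentwise right action *)
Definition dsum_mod (S : {set Q0}) (y : {ffun Q0 -> L}) : Prop :=
  forall t, if t \in S then proj_mod t (y t) else y t = 0.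

Definition dsum_act (y : {ffun Q0 -> L}) (r : L) : {ffun Q0 -> L} :=
  [ffun t => y t * r].

Definition ract (u r : L) : L := u * r.

Definition rhom (X Y : zmodType) (actX : X -> L -> X) (actY : Y -> L -> Y)
  (A : X -> Prop) (B : Y -> Prop) (f : X -> Y) : Prop :=
  (forall u, A u -> B (f u)) /\
  (forall u v, A u -> A v -> f (u + v) = f u + f v) /\
  (forall u r, A u -> f (actX u r) = actY (f u) r).

Definition factors_through_dsum (j i : Q0) (f : L -> L) (S : {set Q0}) : Prop :=
  exists (g : L -> {ffun Q0 -> L}) (h : {ffun Q0 -> L} -> L),
    rhom ract dsum_act (proj_mod j) (dsum_mod S) g /\
    rhom dsum_act ract (dsum_mod S) (proj_mod i) h /\
    forall u, proj_mod j u -> f u = h (g u).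

End BoundQuiverAlgebra.

(* Main.v *)
Require Import Defs.
From HB Require Import structures.
From mathcomp Require Import all_boot all_order all_algebra.
From mathcomp Require Import zify.
From Stdlib Require Import Classical.
Import GRing.Theory.
Local Open Scope ring_scope.
Set Implicit Arguments.
Unset Strict Implicit.
Unset Printing Implicit Defensive.

Section Main.
Variables (k : closedFieldType) (Q0 Q1 : finType) (src tgt : Q1 -> Q0).
Variables (L : algType k) (e : Q0 -> L) (x : Q1 -> L).
Hypothesis eM : forall t u, e t * e u = if t == u then e t else 0.
Hypothesis esum : \sum_t e t = 1.
Hypothesis xE : forall a, x a = e (src a) * x a * e (tgt a).
Hypothesis surj : forall y : L, exists c, valid_comb src tgt c /\ y = comb_val e x c.
Variable mm : nat.
Hypothesis mm_ge2 : (2 <= mm)%N.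
Hypothesis mm_zero : forall p, is_qpath src tgt p -> (mm <= size p.2)%N -> path_img e x p = 0.
Hypothesis adm2 : forall c, valid_comb src tgt c -> comb_val e x c = 0 ->
     forall p, is_qpath src tgt p -> (size p.2 <= 1)%N -> comb_coef c p = 0.
Variable sg : Q0 -> nat.
Hypothesis sg_inj : injective sg.
Hypothesis sg_step : forall a, (sg (src a) <= (sg (tgt a)).+1 /\ sg (tgt a) <= (sg (src a)).+1)%N.

Notation vq := (is_qpath src tgt).
Notation ft := (is_qpath_from_to src tgt).
Notation pimg := (path_img e x).
Notation qend := (qpath_end tgt).
Notation qverts := (qpath_vertices tgt).

Lemma eK t : e t * e t = e t.
Proof. by rewrite eM eqxx. Qed.
Lemma eO t u : t != u -> e t * e u = 0.
Proof. by move=> H; rewrite eM (negPf H). Qed.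
Lemma xl a : e (src a) * x a = x a.
Proof. by rewrite xE !mulrA eK. Qed.
Lemma xr a : x a * e (tgt a) = x a.
Proof. by rewrite xE -!mulrA eK. Qed.

Lemma qpath_cons v a s : vq (v, a :: s) = (src a == v) && vq (tgt a, s).
Proof. rewrite /is_qpath /=; case: s => [|b s] /=; first by rewrite andbT. by rewrite [tgt a == src b]eq_sym. Qed.
Lemma qend_cons v a s : qend (v, a :: s) = qend (tgt a, s).
Proof. by case: s. Qed.
Lemma pimg_cons v a s : src a = v -> pimg (v, a :: s) = x a * pimg (tgt a, s).
Proof.
move=> <-; rewrite /path_img /= big_cons mulrA xl.
by rewrite mulrA xr.
Qed.
Lemma pimg_nil v : pimg (v, [::]) = e v.
Proof. by rewrite /path_img big_nil mulr1. Qed.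
Lemma pimg_l p : e p.1 * pimg p = pimg p.
Proof. by rewrite /path_img mulrA eK. Qed.
Lemma pimg_r p : vq p -> pimg p * e (qend p) = pimg p.
Proof.
case: p => v s; elim: s v => [|a s IH] v /=.
  by move=> _; rewrite pimg_nil eK.
rewrite qpath_cons => /andP[/eqP Ha Hs].
by rewrite qend_cons pimg_cons // -mulrA IH.
Qed.

Lemma split_at p t : vq p -> t \in qverts p ->
  exists p1 p2, [/\ ft p1 p.1 t, ft p2 t (qend p),
     (size p1.2 + size p2.2 = size p.2)%N & pimg p = pimg p1 * pimg p2].
Proof.
case: p => v s; elim: s v => [|a s IH] v /=.
  move=> _; rewrite inE => /eqP ->.
  exists (v, [::]), (v, [::]); split => //=; rewrite /is_qpath_from_to /= ?eqxx //.
  by rewrite !pimg_nil eK.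
rewrite qpath_cons => /andP[/eqP Ha Hs]; rewrite inE => /orP[/eqP ->|Ht].
  exists (v, [::]), (v, a :: s); split => //=.
  - by rewrite /is_qpath_from_to /= eqxx.
  - rewrite /is_qpath_from_to /= qpath_cons Ha Hs !eqxx //.
  - by rewrite pimg_nil -{2}[v]/((v, a::s).1) pimg_l.
have [[v1 s1] [p2 [H1 H2 H3 H4]]] := IH (tgt a) Hs Ht.
move: H1; rewrite /is_qpath_from_to /= => /and3P[Hv1 /eqP Ev1 He1].
subst v1.
exists (v, a :: s1), p2; split => //=.
- by rewrite /is_qpath_from_to qpath_cons Ha eqxx Hv1 qend_cons.
- by rewrite qend_cons.
- by rewrite -H3.
- by rewrite !pimg_cons // H4 mulrA.
Qed.

Lemma ivt p t : vq p ->
  (minn (sg p.1) (sg (qend p)) <= sg t <= maxn (sg p.1) (sg (qend p)))%N ->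
  t \in qverts p.
Proof.
case: p => v s; elim: s v => [|a s IH] v /=.
  move=> _; rewrite minnn maxnn -eqn_leq => /eqP /sg_inj ->.
  by rewrite inE.
rewrite qpath_cons => /andP[/eqP Ha Hs] Hr.
rewrite inE; case: (eqVneq t v) => //= Htv.
apply: IH => //; rewrite qend_cons in Hr.
have Hne : sg t <> sg v by move=> /sg_inj; apply/eqP.
have := sg_step a; rewrite Ha => -[H1 H2].
move: Hr; set E := sg (qend (tgt a, s)) => Hr.
apply/andP; move/andP: Hr => [Hr1 Hr2]; rewrite /=; split; lia.
Qed.

Lemma ft_nil p i j : ft p i j -> size p.2 = 0%N -> i = j.
Proof.
case: p => v [|a s] //= /and3P[_ /eqP <- /eqP <-] _; done.
Qed.

Lemma ivt_ft q i j t : ft q i j ->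
  (minn (sg i) (sg j) <= sg t <= maxn (sg i) (sg j))%N -> t \in qverts q.
Proof.
by move=> /and3P[Hq /eqP <- /eqP <-]; apply: ivt.
Qed.

Lemma sp_cons v a s i j : shortest_qpath src tgt (v, a :: s) i j ->
  [/\ v = i, src a = i, src a != tgt a,
      shortest_qpath src tgt (tgt a, s) (tgt a) j &
      forall q, ft q i j -> tgt a \in qverts q].
Proof.
move=> [Hft Hmin]; move: (Hft) => /and3P[Hv /eqP /= Hv1 /eqP He].
move: Hv; rewrite qpath_cons => /andP[/eqP Ha Hs].
rewrite qend_cons in He; subst v.
have Hsh : shortest_qpath src tgt (tgt a, s) (tgt a) j.
  split; first by rewrite /is_qpath_from_to Hs He !eqxx.
  move=> [q1 q2] /and3P[Hq /eqP /= Hq1 Hqe]; subst q1.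
  suff H : (size (a :: s) <= size (a :: q2))%N by exact: H.
  apply: (Hmin (i, a :: q2)); by rewrite /is_qpath_from_to qpath_cons Ha Hq qend_cons (eqP Hqe) !eqxx.
have Hnl : src a != tgt a.
  apply/eqP => Hl.
  suff : (size (a :: s) <= size s)%N by rewrite /= ltnn.
  apply: (Hmin (tgt a, s)); by rewrite /is_qpath_from_to Hs He /= -Hl Ha !eqxx.
split => //.
have Hr : (minn (sg i) (sg j) <= sg (tgt a) <= maxn (sg i) (sg j))%N.
  apply/idPn => Hn.
  have Hne : sg (tgt a) <> sg i.
    by move=> /sg_inj H; move: Hnl; rewrite Ha H eqxx.
  have := sg_step a; rewrite Ha => -[H1 H2].
  have Hi : i \in qverts (tgt a, s).
    apply: (ivt_ft (i := tgt a) (j := j)); first by rewrite /is_qpath_from_to Hs He !eqxx.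
    apply/andP; move/negP: Hn => Hn; split; lia.
  have [p1 [p2 [_ H2' H3 _]]] := split_at Hs Hi.
  rewrite He in H2'; have := Hmin _ H2'; rewrite /= in H3 *; lia.
by move=> q Hq; apply: ivt_ft Hq Hr.
Qed.

Lemma sp_range q j i t : shortest_qpath src tgt q j i -> t \in qverts q ->
  (minn (sg i) (sg j) <= sg t <= maxn (sg i) (sg j))%N.
Proof.
move=> [Hft Hmin] Ht.
move: (Hft) => /and3P[Hq /eqP Hq1 /eqP Hqe].
have [q1 [q2 [H1 H2 H3 _]]] := split_at Hq Ht.
rewrite Hq1 in H1; rewrite Hqe in H2.
apply/idPn => Hn; move/negP: Hn => Hn.
have [Hc|Hc] : (minn (sg t) (sg i) <= sg j <= maxn (sg t) (sg i))%N \/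
               (minn (sg j) (sg t) <= sg i <= maxn (sg j) (sg t))%N.
  case: (boolP (minn (sg t) (sg i) <= sg j <= maxn (sg t) (sg i))%N) => Hb; [by left|right].
  move/negP: Hb => Hb; apply/andP; split; lia.
- have Hj := ivt_ft H2 Hc.
  move: (H2) => /and3P[Hq2 /eqP Hq21 /eqP Hq2e].
  have [r1 [r2 [_ R2 R3 _]]] := split_at Hq2 Hj.
  rewrite Hq2e in R2; have := Hmin _ R2 => Hs.
  have Hz : size q1.2 = 0%N by lia.
  have Htj := ft_nil H1 Hz; apply: Hn; rewrite -Htj; apply/andP; split; lia.
- have Hi := ivt_ft H1 Hc.
  move: (H1) => /and3P[Hq1' /eqP Hq11 /eqP Hq1e].
  have [r1 [r2 [R1 _ R3 _]]] := split_at Hq1' Hi.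
  rewrite Hq11 in R1; have := Hmin _ R1 => Hs.
  have Hz : size q2.2 = 0%N by lia.
  have Hti := ft_nil H2 Hz; apply: Hn; rewrite Hti; apply/andP; split; lia.
Qed.

Definition Jn (m : nat) (y : L) := exists c : seq (k * qpath Q0 Q1),
  [/\ valid_comb src tgt c, all (fun cp : k * qpath Q0 Q1 => m <= size cp.2.2)%N c
    & y = comb_val e x c].

Lemma comb_cons cp c : comb_val e x (cp :: c) = cp.1 *: pimg cp.2 + comb_val e x c.
Proof. by rewrite /comb_val big_cons. Qed.
Lemma comb_nil : comb_val e x [::] = 0.
Proof. by rewrite /comb_val big_nil. Qed.

Lemma Jn0 m : Jn m 0.
Proof. by exists [::]; rewrite comb_nil. Qed.

Lemma JnD m y z : Jn m y -> Jn m z -> Jn m (y + z).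
Proof.
move=> [c [Hc1 Hc2 ->]] [d [Hd1 Hd2 ->]]; exists (c ++ d).
split; first by rewrite /valid_comb all_cat; apply/andP.
  by rewrite all_cat Hc2 Hd2.
by rewrite /comb_val big_cat.
Qed.

Lemma JnZ m a y : Jn m y -> Jn m (a *: y).
Proof.
move=> [c [Hc1 Hc2 ->]]; exists [seq (a * cp.1, cp.2) | cp <- c]; split.
- by rewrite /valid_comb all_map.
- by rewrite all_map.
- rewrite /comb_val big_map scaler_sumr; apply: eq_bigr => cp _.
  by rewrite scalerA.
Qed.

Lemma JnN m y : Jn m y -> Jn m (- y).
Proof. by move=> H; rewrite -scaleN1r; apply: JnZ. Qed.
Lemma JnB m y z : Jn m y -> Jn m z -> Jn m (y - z).
Proof. by move=> Hy Hz; apply: JnD => //; apply: JnN. Qed.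

Lemma Jn_le m m' y : (m <= m')%N -> Jn m' y -> Jn m y.
Proof.
move=> Hm [c [Hc1 Hc2 ->]]; exists c; split => //.
by apply/allP => cp Hcp; apply: leq_trans Hm ((allP Hc2) cp Hcp).
Qed.

Lemma Jn_path p : vq p -> Jn (size p.2) (pimg p).
Proof.
move=> Hp; exists [:: (1, p)]; split.
- by rewrite /valid_comb /= Hp.
- by rewrite /= leqnn.
- by rewrite comb_cons comb_nil scale1r addr0.
Qed.

Lemma Jn_all y : Jn 0 y.
Proof.
have [c [Hc ->]] := surj y; exists c; split => //.
by apply/allP.
Qed.

Lemma vq_cat p q : vq p -> vq q -> qend p = q.1 -> vq (p.1, p.2 ++ q.2).
Proof.
case: p => v s; elim: s v => [|a s IH] v /=.
  by move=> _ Hq; rewrite /qpath_end /= => ->; case: q Hq.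
rewrite !qpath_cons qend_cons => /andP[Ha Hs] Hq He.
by rewrite Ha /=; apply: IH.
Qed.

Lemma qend_cat p q : vq q -> qend p = q.1 -> qend (p.1, p.2 ++ q.2) = qend q.
Proof.
case: p => v s; elim: s v => [|a s IH] v /=.
  by move=> Hq; rewrite {1}/qpath_end /= => ->; case: q Hq.
by move=> Hq He; rewrite !qend_cons; apply: IH => //; rewrite -He qend_cons.
Qed.

Lemma pimg_mul p q : vq p -> vq q ->
  pimg p * pimg q = if qend p == q.1 then pimg (p.1, p.2 ++ q.2) else 0.
Proof.
move=> Hp Hq; rewrite [pimg q]/path_img -(pimg_r Hp) mulrA -(mulrA (pimg p)) eM.
case: eqP => [_|_]; last by rewrite mulr0 mul0r.
rewrite (pimg_r Hp) /path_img big_cat /= -!mulrA //.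
Qed.

Lemma Jn_mul_path p b z : vq p -> Jn b z -> Jn (size p.2 + b) (pimg p * z).
Proof.
move=> Hp [d [Hd1 Hd2 ->]]; elim: d Hd1 Hd2 => [|cq d IH] /=.
  by move=> _ _; rewrite comb_nil mulr0; apply: Jn0.
move=> /andP[Hq Hd1] /andP[Hb Hd2]; rewrite comb_cons mulrDr.
apply: JnD; last by apply: IH.
rewrite -scalerAr; apply: JnZ; rewrite pimg_mul //.
case: eqP => He; last by apply: Jn0.
apply: Jn_le (Jn_path (vq_cat Hp Hq He)).
by rewrite /= size_cat leq_add2l.
Qed.

Lemma Jn_mul a b y z : Jn a y -> Jn b z -> Jn (a + b) (y * z).
Proof.
move=> [c [Hc1 Hc2 ->]] Hz; elim: c Hc1 Hc2 => [|cp c IH] /=.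
  by move=> _ _; rewrite comb_nil mul0r; apply: Jn0.
move=> /andP[Hp Hc1] /andP[Ha Hc2]; rewrite comb_cons mulrDl.
apply: JnD; last by apply: IH.
rewrite -scalerAl; apply: JnZ.
by apply: Jn_le (Jn_mul_path Hp Hz); rewrite leq_add2r.
Qed.

Lemma Jn_mm y : Jn mm y -> y = 0.
Proof.
move=> [c [Hc1 Hc2 ->]]; rewrite /comb_val big1_seq // => cp /andP[_ Hin].
by rewrite mm_zero ?scaler0 //; [apply: (allP Hc1) | apply: (allP Hc2)].
Qed.

Lemma Jn_pow y m : Jn 1 y -> Jn m (y ^+ m).
Proof.
move=> Hy; elim: m => [|m IH]; first exact: Jn_all.
by rewrite exprSr -addn1; apply: Jn_mul.
Qed.

Lemma nilp y : Jn 1 y -> y ^+ mm = 0.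
Proof. by move=> Hy; apply: Jn_mm; apply: Jn_pow. Qed.

Lemma JnL m y z : Jn m z -> Jn m (y * z).
Proof. by move=> H; rewrite -[m]add0n; apply: Jn_mul => //; apply: Jn_all. Qed.
Lemma JnR m y z : Jn m y -> Jn m (y * z).
Proof. by move=> H; rewrite -[m]addn0; apply: Jn_mul => //; apply: Jn_all. Qed.

Lemma e_sum_l s (a : Q0 -> k) : e s * (\sum_u a u *: e u) = a s *: e s.
Proof.
rewrite big_distrr (bigD1 s) //= -scalerAr eK big1 ?addr0 // => u Hu.
by rewrite -scalerAr eO ?scaler0 // eq_sym.
Qed.

Lemma e_sum_r s (a : Q0 -> k) : (\sum_u a u *: e u) * e s = a s *: e s.
Proof.
rewrite big_distrl (bigD1 s) //= -scalerAl eK big1 ?addr0 // => u Hu.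
by rewrite -scalerAl eO ?scaler0.
Qed.

Lemma decomp y : exists (a : Q0 -> k) j, Jn 1 j /\ y = \sum_u a u *: e u + j.
Proof.
have [c [Hc ->]] := surj y; elim: c Hc => [|cp c IH] /=.
  move=> _; exists (fun _ => 0), 0; split; first exact: Jn0.
  by rewrite comb_nil big1 ?addr0 // => u _; rewrite scale0r.
move=> /andP[Hp Hc]; rewrite comb_cons; have [a [j [Hj ->]]] := IH Hc.
case: cp Hp => c0 [v s] /= Hp; case: s Hp => [|b s] Hp.
  exists (fun u => a u + (if u == v then c0 else 0)), j; split => //.
  have -> : \sum_u (a u + (if u == v then c0 else 0)) *: e u = \sum_u a u *: e u + c0 *: e v.
    rewrite (eq_bigr (fun u => a u *: e u + (if u == v then c0 else 0) *: e u)); last first.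
      by move=> u _ /=; rewrite scalerDl.
    rewrite big_split /= [X in _ + X](bigD1 v) //= ?eqxx [X in c0 *: e v + X]big1 ?addr0 // => u /negPf ->.
    by rewrite scale0r.
  by rewrite pimg_nil addrA [c0 *: _ + _]addrC.
exists a, (c0 *: pimg (v, b :: s) + j); split.
  apply: JnD => //; apply: JnZ; apply: Jn_le (Jn_path Hp) => //.
by rewrite addrCA.
Qed.

Lemma corner i y : exists (a : k) l, Jn 1 l /\ e i * y * e i = a *: e i + e i * l * e i.
Proof.
have [a [j [Hj ->]]] := decomp y; exists (a i), j; split => //.
by rewrite mulrDr mulrDl e_sum_l -scalerAl eK.
Qed.

Lemma offdiag s t y : s != t -> Jn 1 (e s * y * e t).
Proof.
move=> Hst; have [a [j [Hj ->]]] := decomp y.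
rewrite mulrDr mulrDl e_sum_l -scalerAl eO // scaler0 add0r.
by apply: JnR; apply: JnL.
Qed.

Lemma coef_zero (c0 : k) p m : vq p -> (size p.2 <= 1)%N -> (size p.2 < m)%N ->
  Jn m (c0 *: pimg p) -> c0 = 0.
Proof.
move=> Hp Hs Hm [d [Hd1 Hd2 Heq]].
have Hv : valid_comb src tgt ((c0, p) :: [seq (- cp.1, cp.2) | cp <- d]).
  by rewrite /valid_comb /= Hp all_map.
have Hval : comb_val e x ((c0, p) :: [seq (- cp.1, cp.2) | cp <- d]) = 0.
  rewrite comb_cons /comb_val big_map /=.
  under eq_bigr do rewrite scaleNr.
  by rewrite sumrN -/(comb_val e x d) -Heq subrr.
have := adm2 Hv Hval Hp Hs.
rewrite /comb_coef big_cons /= eqxx big_map big1_seq ?addr0 //.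
move=> cp /andP[/= /eqP Hcp Hin]; exfalso.
have := allP Hd2 cp Hin; rewrite Hcp; move: Hm; clear; lia.
Qed.

Lemma Kkey (c : k) s r p : c != 0 -> Jn 1 s -> Jn 1 r -> c *: p = s * p + p * r -> p = 0.
Proof.
move=> Hc Hs Hr H.
set s' := c^-1 *: s; set r' := c^-1 *: r.
have Hs' : Jn 1 s' by apply: JnZ.
have Hr' : Jn 1 r' by apply: JnZ.
have Hp : p = s' * p + p * r'.
  by rewrite /s' /r' -scalerAl -scalerAr -scalerDr -H scalerA mulVf // scale1r.
have Hp2 : p * (1 - r') = s' * p by rewrite mulrBr mulr1 {1}Hp addrK.
set u := \sum_(i < mm) r' ^+ i.
have Hu : (1 - r') * u = 1.
  by rewrite -opprB mulNr -subrX1 nilp // sub0r opprK.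
have Hp3 : p = s' * p * u by rewrite -Hp2 -mulrA Hu mulr1.
have Hm : forall m, p = s' ^+ m * p * u ^+ m.
  elim=> [|m IH]; first by rewrite !expr0 mul1r mulr1.
  rewrite exprS exprSr.
  have -> : s' * s' ^+ m * p * (u ^+ m * u) = s' * (s' ^+ m * p * u ^+ m) * u.
    by rewrite !mulrA.
  by rewrite -IH -Hp3.
by rewrite (Hm mm) nilp // mul0r mul0r.
Qed.

Lemma ecorner_sum (a : Q0 -> k) j t :
  e t * (\sum_u a u *: e u + j) * e t = a t *: e t + e t * j * e t.
Proof. by rewrite mulrDr mulrDl e_sum_l -scalerAl eK. Qed.

Lemma sum_mul_sum (b c : Q0 -> k) :
  (\sum_u b u *: e u) * (\sum_u c u *: e u) = \sum_u (b u * c u) *: e u.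
Proof.
rewrite big_distrl; apply: eq_bigr => u _.
by rewrite /= -scalerAl e_sum_l scalerA.
Qed.

Lemma inv_geom z : Jn 1 z -> (1 - z) * \sum_(i < mm) z ^+ i = 1.
Proof. by move=> Hz; rewrite -opprB mulNr -subrX1 nilp // sub0r opprK. Qed.

Lemma J_rad r : Jn 1 r -> jacobson_rad r.
Proof.
move=> Hr M [[M0 [MD MM]] [HM1 Hmax]].
apply: NNPP => HMr.
pose N z := exists m s, M m /\ z = m + r * s.
have HN : right_ideal N.
  split; first by exists 0, 0; rewrite mulr0 addr0.
  split.
  - move=> u v [m1 [s1 [Hm1 ->]]] [m2 [s2 [Hm2 ->]]].
    by exists (m1 + m2), (s1 + s2); split; [exact: MD | rewrite mulrDr addrACA].
  - move=> u q [m1 [s1 [Hm1 ->]]].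
    by exists (m1 * q), (s1 * q); split; [exact: MM | rewrite mulrDl mulrA].
have HMN : forall u, M u -> N u by move=> u Hu; exists u, 0; rewrite mulr0 addr0.
case: (Hmax N HN HMN) => [HNM|[m [s [Hm Heq]]]].
  by apply: HMr; apply: HNM; exists 0, 1; rewrite mulr1 add0r.
have Hz : Jn 1 (r * s) by apply: JnR.
have Hmz : m = 1 - r * s by rewrite Heq addrK.
apply: HM1; rewrite -(inv_geom Hz) -Hmz; exact: MM.
Qed.

Lemma rad_J r : jacobson_rad r -> Jn 1 r.
Proof.
move=> Hr; have [a [j [Hj Hrj]]] := decomp r.
suff Ha : forall t, a t = 0.
  by rewrite Hrj big1 ?add0r // => t _; rewrite Ha scale0r.
move=> t.
pose M z := exists b jj, [/\ Jn 1 jj, z = \sum_u b u *: e u + jj & b t = 0].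
have HM : maximal_right_ideal M.
  split; [split; [|split] | split].
  - exists (fun _ => 0), 0; split => //; first exact: Jn0.
    by rewrite big1 ?addr0 // => u _; rewrite scale0r.
  - move=> u v [b1 [j1 [Hj1 -> Hb1]]] [b2 [j2 [Hj2 -> Hb2]]].
    exists (fun w => b1 w + b2 w), (j1 + j2); split.
    + exact: JnD.
    + rewrite addrACA; congr (_ + _); rewrite -big_split /=.
      by apply: eq_bigr => w _; rewrite scalerDl.
    + by rewrite /= Hb1 Hb2 addr0.
  - move=> u q [b1 [j1 [Hj1 -> Hb1]]].
    have [c [jq [Hjq ->]]] := decomp q.
    exists (fun w => b1 w * c w), ((\sum_u b1 u *: e u) * jq + j1 * (\sum_u c u *: e u + jq)).
    split.
    + by apply: JnD; [apply: JnL | apply: JnR].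
    + by rewrite mulrDl mulrDr sum_mul_sum addrA.
    + by rewrite /= Hb1 mul0r.
  - move=> [b [jj [Hjj H1 Hbt]]].
    have := ecorner_sum b jj t; rewrite -H1 mulr1 eK Hbt scale0r add0r => He.
    have : (1 : k) = 0.
      apply: (coef_zero (p := (t, [::])) (m := 1)) => //.
      by rewrite pimg_nil scale1r He; apply: JnR; apply: JnL.
    by move/eqP; rewrite oner_eq0.
  - move=> N [N0 [ND NM]] HMN.
    case: (classic (exists u, N u /\ ~ M u)) => [[u [Hu HMu]]|Hno]; last first.
      left => u Hu; apply: NNPP => Hn; apply: Hno; by exists u.
    right.
    have [c [ju [Hju Hue]]] := decomp u.
    have Hct : c t != 0.
      by apply/eqP => Hc0; apply: HMu; exists c, ju.
    set d := (c t)^-1.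
    have Hv : M (1 - d *: u).
      exists (fun w => 1 - d * c w), (- (d *: ju)); split.
      + by apply: JnN; apply: JnZ.
      + rewrite Hue -esum scalerDr opprD addrA; congr (_ + _).
        rewrite scaler_sumr -sumrB; apply: eq_bigr => w _.
        by rewrite scalerBl scale1r scalerA.
      + by rewrite /= mulVf // subrr.
    have Hdu : N (d *: u).
      have -> : d *: u = u * (d *: 1) by rewrite -scalerAr mulr1.
      exact: NM.
    have := ND _ _ (HMN _ Hv) Hdu; by rewrite subrK.
have [b [jj [Hjj Hr' Hbt]]] := Hr M HM.
have H1 : a t *: e t = e t * (jj - j) * e t.
  have := ecorner_sum a j t; rewrite -Hrj Hr' ecorner_sum Hbt scale0r add0r => Heq.
  by rewrite mulrBr mulrBl Heq addrK.
apply: (coef_zero (p := (t, [::])) (m := 1)) => //.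
by rewrite pimg_nil H1; apply: JnR; apply: JnL; apply: JnB.
Qed.

Hypothesis Cb1 : forall a, src a != tgt a -> forall y,
  (exists l, y = x a * l * e (tgt a)) <-> (exists l, y = e (src a) * l * e (tgt a)).
Hypothesis Cb2 : forall a, src a != tgt a -> forall y,
  (exists l, y = e (src a) * l * e (tgt a)) <-> (exists l, y = e (src a) * l * x a).
Hypothesis Cc : forall i j p, shortest_qpath src tgt p i j -> pimg p != 0.

Lemma eKr y t : y * e t * e t = y * e t.
Proof. by rewrite -mulrA eK. Qed.

Lemma pimg_ft p i j : ft p i j -> e i * pimg p * e j = pimg p.
Proof.
move=> /and3P[Hp /eqP <- /eqP <-]; by rewrite pimg_l pimg_r.
Qed.

Lemma pimg_zero p A B : vq p -> ~~ ft p A B -> e A * pimg p * e B = 0.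
Proof.
move=> Hp; rewrite /is_qpath_from_to Hp /=.
case: (eqVneq p.1 A) => [H1|H1] /=.
  move=> HE; rewrite -(pimg_r Hp) -!mulrA eO ?mulr0 //.
rewrite -(pimg_l p) !mulrA eO 1?eq_sym // => _; by rewrite !mul0r.
Qed.

Lemma dec A C B : (forall q, ft q A B -> C \in qverts q) -> forall y,
  exists us : seq (L * L),
    e A * y * e B = \sum_(uv <- us) (e A * uv.1 * e C) * (e C * uv.2 * e B).
Proof.
move=> HC y; have [c [Hc ->]] := surj y; elim: c Hc => [|cp c IH] /=.
  by move=> _; exists [::]; rewrite comb_nil mulr0 mul0r big_nil.
move=> /andP[Hp Hc]; have [us Hus] := IH Hc.
rewrite comb_cons mulrDr mulrDl Hus.
case: (boolP (ft cp.2 A B)) => Hft.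
- have [p1 [p2 [H1 H2 _ H4]]] := split_at Hp (HC _ Hft).
  have F0 := pimg_ft Hft.
  move: Hft => /and3P[_ /eqP Hs /eqP He]; rewrite Hs in H1; rewrite He in H2.
  have F1 := pimg_ft H1; have F2 := pimg_ft H2.
  exists ((cp.1 *: pimg p1, pimg p2) :: us); rewrite big_cons /=; congr (_ + _).
  by rewrite -!scalerAr -!scalerAl F0 F1 F2 H4.
- exists us; by rewrite -scalerAr -scalerAl pimg_zero // scaler0 add0r.
Qed.

Lemma CLR m i j p : size p.2 = m -> shortest_qpath src tgt p i j ->
  (forall y, exists s, e i * y * e j = e i * s * e i * pimg p) /\
  (forall y, exists s, e i * y * e j = pimg p * (e j * s * e j)).
Proof.
elim: m i j p => [|m IH] i j [v s] /= Hs Hsh.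
  move/size0nil: Hs => Hs; subst s.
  have Hij := ft_nil Hsh.1 (erefl _).
  move: Hsh => [/and3P[_ /eqP /= Hv _] _]; subst v; subst j.
  rewrite pimg_nil; split => y; exists y; [by rewrite eKr | by rewrite !mulrA eK].
case: s Hs Hsh => [|a s] //= [Hs] Hsh.
have [Hv Ha Hnl Hsh' Hall] := sp_cons Hsh; subst v.
have [CL' CR'] := IH (tgt a) j (tgt a, s) Hs Hsh'.
rewrite pimg_cons //.
set i' := tgt a; set P' := pimg (i', s).
have xi : e i * x a = x a by rewrite -Ha xl.
have xi' : x a * e i' = x a by rewrite xr.
split => y; have [us ->] := dec Hall y.
- pose Q z := exists s0, z = e i * s0 * e i * (x a * P').
  suff : Q (\sum_(uv <- us) e i * uv.1 * e i' * (e i' * uv.2 * e j)) by [].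
  apply: big_ind.
  + by exists 0; rewrite mulr0 !mul0r.
  + move=> z1 z2 [s1 ->] [s2 ->]; exists (s1 + s2).
    by rewrite mulrDr !mulrDl.
  + move=> [u w] _ /=.
    have [s1 Hs1] := CL' w; rewrite Hs1.
    have [l Hl] : exists l, e i * (u * e i' * s1) * e i' = e i * l * x a.
      have := (Cb2 Hnl (e i * (u * e i' * s1) * e i')).1.
      rewrite Ha; apply; by exists (u * e i' * s1).
    exists l.
    have -> : e i * u * e i' * (e i' * s1 * e i' * P') = e i * (u * e i' * s1) * e i' * P'.
      by rewrite !mulrA !eKr.
    by rewrite Hl [RHS]mulrA -(mulrA (e i * l) (e i) (x a)) xi.
- pose Q z := exists s0, z = x a * P' * (e j * s0 * e j).
  suff : Q (\sum_(uv <- us) e i * uv.1 * e i' * (e i' * uv.2 * e j)) by [].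
  apply: big_ind.
  + by exists 0; rewrite mulr0 !mul0r mulr0.
  + move=> z1 z2 [s1 ->] [s2 ->]; exists (s1 + s2).
    by rewrite mulrDr !mulrDl mulrDr.
  + move=> [u w] _ /=.
    have [l Hl] : exists l, e i * u * e i' = x a * l * e i'.
      have := (Cb1 Hnl (e i * u * e i')).2.
      rewrite Ha; apply; by exists u.
    have [s1 Hs1] := CR' (l * e i' * w).
    exists s1; rewrite Hl.
    have -> : x a * l * e i' * (e i' * w * e j) = x a * (e i' * (l * e i' * w) * e j).
      by rewrite !mulrA !eKr xi'.
    by rewrite Hs1 [LHS]mulrA.
Qed.

Lemma corner_rad_J i l : in_corner_rad e i l -> Jn 1 l /\ e i * l * e i = l.
Proof.
move=> [r [Hr ->]]; split; first by apply: JnR; apply: JnL; apply: rad_J.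
by rewrite !mulrA eK eKr.
Qed.

Lemma J_corner_rad i l : Jn 1 l -> in_corner_rad e i (e i * l * e i).
Proof. by move=> Hl; exists l; split => //; apply: J_rad. Qed.

Lemma diff_eq (c1 c2 : k) (P X Y : L) : c1 *: P + X = c2 *: P + Y -> (c1 - c2) *: P = Y - X.
Proof.
move=> H; rewrite scalerBl; apply/eqP; rewrite subr_eq; apply/eqP.
by rewrite -[c1 *: P](addrK X) H [RHS]addrC addrA.
Qed.

Lemma expl i (c : k) l P : e i * P = P -> (c *: e i + l) * P = c *: P + l * P.
Proof. by move=> H; rewrite mulrDl -scalerAl H. Qed.
Lemma expr j (c : k) l P : P * e j = P -> P * (c *: e j + l) = c *: P + P * l.
Proof. by move=> H; rewrite mulrDr -scalerAr H. Qed.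

Lemma part2 i j p w : shortest_qpath src tgt p i j -> (exists l, w = e i * l * e j) ->
  exists a : k,
    (exists l, in_corner_rad e i l /\ w = (a *: e i + l) * pimg p) /\
    (exists l', in_corner_rad e j l' /\ w = pimg p * (a *: e j + l')) /\
    (forall (b : k) l, in_corner_rad e i l -> w = (b *: e i + l) * pimg p -> b = a) /\
    (forall (b : k) l', in_corner_rad e j l' -> w = pimg p * (b *: e j + l') -> b = a).
Proof.
move=> Hsh [l0 ->].
have HP0 := Cc Hsh.
have [Hft _] := Hsh; move: (Hft) => /and3P[Hp /eqP Hp1 /eqP Hpe].
have HPl : e i * pimg p = pimg p by rewrite -Hp1 pimg_l.
have HPr : pimg p * e j = pimg p by rewrite -Hpe pimg_r.
have [CL CR] := CLR (erefl _) Hsh.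
have [s1 Hs1] := CL l0; have [s2 Hs2] := CR l0.
have [a [l1 [Hl1 Ha]]] := corner i s1.
have [a' [l2 [Hl2 Ha']]] := corner j s2.
rewrite Ha in Hs1; rewrite Ha' in Hs2.
have HJ1 : Jn 1 (e i * l1 * e i) by apply: JnR; apply: JnL.
have HJ2 : Jn 1 (e j * l2 * e j) by apply: JnR; apply: JnL.
have Eaa : a = a'.
  case: (eqVneq a a') => // Hne; exfalso.
  have H := Hs1; rewrite Hs2 expl // expr // in H.
  have H' : (a' - a) *: pimg p = (e i * l1 * e i) * pimg p + pimg p * (- (e j * l2 * e j)).
    by rewrite mulrN; exact: diff_eq H.
  move/eqP: HP0; apply; apply: (Kkey _ _ _ H') => //.
    by rewrite subr_eq0 eq_sym.
  exact: JnN.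
subst a'.
exists a; split; [|split; [|split]].
- by exists (e i * l1 * e i); split => //; apply: J_corner_rad.
- by exists (e j * l2 * e j); split => //; apply: J_corner_rad.
- move=> b l Hl Hb; have [HlJ _] := corner_rad_J Hl.
  case: (eqVneq b a) => // Hne; exfalso.
  have H := Hs1; rewrite Hb !expl // in H.
  have H' : (b - a) *: pimg p = (e i * l1 * e i - l) * pimg p + pimg p * 0.
    by rewrite mulr0 addr0 mulrBl; exact: diff_eq H.
  move/eqP: HP0; apply; apply: (Kkey _ _ _ H') => //.
  + by rewrite subr_eq0.
  + exact: JnB.
  + exact: Jn0.
- move=> b l Hl Hb; have [HlJ _] := corner_rad_J Hl.
  case: (eqVneq b a) => // Hne; exfalso.
  have H := Hs2; rewrite Hb !expr // in H.
  have H' : (b - a) *: pimg p = 0 * pimg p + pimg p * (e j * l2 * e j - l).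
    by rewrite mul0r add0r mulrBr; exact: diff_eq H.
  move/eqP: HP0; apply; apply: (Kkey _ _ _ H') => //.
  + by rewrite subr_eq0.
  + exact: Jn0.
  + exact: JnB.
Qed.

Lemma vq1 a : vq (src a, [:: a]).
Proof. by rewrite /is_qpath /= eqxx. Qed.
Lemma pimg1 a : pimg (src a, [:: a]) = x a.
Proof. by rewrite pimg_cons // pimg_nil xr. Qed.

Lemma xJ2 (c : k) a : Jn 2 (c *: x a) -> c = 0.
Proof.
move=> H; apply: (coef_zero (p := (src a, [:: a])) (m := 2)) => //.
  exact: vq1.
by rewrite pimg1.
Qed.

Lemma part1 a : src a != tgt a -> forall y,
  (exists r, jacobson_rad r /\ y = e (src a) * r * x a) <->
  (exists r, jacobson_rad r /\ y = x a * r * e (tgt a)).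
Proof.
move=> Hnl y; set i := src a; set j := tgt a.
have HxJ : Jn 1 (x a) by rewrite -pimg1; apply: (Jn_path (vq1 a)).
split.
- move=> [r [Hr ->]].
  have HJ2 : Jn 2 (e i * r * x a) by apply: (Jn_mul (a := 1) (b := 1)) => //; apply: JnL; apply: rad_J.
  have [l Hl] : exists l, e i * r * x a = x a * l * e j.
    apply/(Cb1 Hnl); exists (r * x a); by rewrite mulrA -(mulrA _ (x a)) xr.
  have [c [l2 [Hl2 Hc]]] := corner j l.
  have Hxl : x a * l * e j = c *: x a + x a * (e j * l2 * e j).
    have -> : x a * l * e j = x a * (e j * l * e j) by rewrite !mulrA xr.
    by rewrite Hc mulrDr -scalerAr xr.
  have Hc0 : c = 0.
    apply: (xJ2 (a := a)); have -> : c *: x a = e i * r * x a - x a * (e j * l2 * e j).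
      by rewrite Hl Hxl addrK.
    apply: JnB => //; apply: (Jn_mul (a := 1) (b := 1)) => //; apply: JnR; apply: JnL => //.
  exists (e j * l2 * e j); split; first by apply: J_rad; apply: JnR; apply: JnL.
  by rewrite Hl Hxl Hc0 scale0r add0r -[RHS]mulrA eKr.
- move=> [r [Hr ->]].
  have HJ2 : Jn 2 (x a * r * e j) by apply: JnR; apply: (Jn_mul (a := 1) (b := 1)) => //; apply: rad_J.
  have [l Hl] : exists l, x a * r * e j = e i * l * x a.
    apply/(Cb2 Hnl); apply/(Cb1 Hnl); by exists r.
  have [c [l2 [Hl2 Hc]]] := corner i l.
  have Hxl : e i * l * x a = c *: x a + (e i * l2 * e i) * x a.
    have -> : e i * l * x a = (e i * l * e i) * x a by rewrite -(mulrA _ (e i)) xl.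
    by rewrite Hc mulrDl -scalerAl xl.
  have Hc0 : c = 0.
    apply: (xJ2 (a := a)); have -> : c *: x a = x a * r * e j - (e i * l2 * e i) * x a.
      by rewrite Hl Hxl addrK.
    apply: JnB => //; rewrite -[2%N]/(1 + 1)%N; apply: Jn_mul => //; apply: JnR; apply: JnL => //.
  exists (e i * l2 * e i); split; first by apply: J_rad; apply: JnR; apply: JnL.
  by rewrite Hl Hxl Hc0 scale0r add0r !mulrA eK.
Qed.

Definition Bp p z := exists s r, [/\ Jn 1 s, Jn 1 r & z = s * pimg p + pimg p * r].

Lemma B0 p : Bp p 0.
Proof. by exists 0, 0; split; [exact: Jn0 | exact: Jn0 | rewrite mul0r mulr0 addr0]. Qed.

Lemma BD p z1 z2 : Bp p z1 -> Bp p z2 -> Bp p (z1 + z2).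
Proof.
move=> [s1 [r1 [H1 H2 ->]]] [s2 [r2 [H3 H4 ->]]]; exists (s1 + s2), (r1 + r2); split.
- exact: JnD.
- exact: JnD.
- by rewrite mulrDl mulrDr addrACA.
Qed.

Lemma termB i j p t z lt : shortest_qpath src tgt p i j ->
  ~~ (minn (sg i) (sg j) <= sg t <= maxn (sg i) (sg j))%N ->
  Bp p ((e i * z * e t) * (e t * lt * e j)).
Proof.
move=> Hp Hout; have [CL CR] := CLR (erefl _) Hp.
have [Hft _] := Hp.
have Hit : i != t.
  apply/eqP => Ht; move: Hout; rewrite -Ht => /negP; apply; apply/andP; split; lia.
have Hjt : j != t.
  apply/eqP => Ht; move: Hout; rewrite -Ht => /negP; apply; apply/andP; split; lia.
case: (boolP (minn (sg i) (sg t) <= sg j <= maxn (sg i) (sg t))%N) => Hc.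
- have Hall : forall q', ft q' i t -> j \in qverts q' by move=> q' Hq'; apply: ivt_ft Hq' Hc.
  have [us ->] := dec Hall z.
  rewrite big_distrl /=; apply: big_ind; [exact: B0 | exact: BD |].
  move=> [u v] _ /=.
  have [s1 ->] := CR u.
  exists 0, ((e j * s1 * e j) * (e j * v * e t) * (e t * lt * e j)); split.
  + exact: Jn0.
  + by apply: JnR; apply: JnL; apply: offdiag.
  + by rewrite mul0r add0r !mulrA.
- have Hc' : (minn (sg t) (sg j) <= sg i <= maxn (sg t) (sg j))%N.
    move/negP: Hc => Hc; move/negP: Hout => Hout; apply/andP; split; lia.
  have Hall : forall q', ft q' t j -> i \in qverts q' by move=> q' Hq'; apply: ivt_ft Hq' Hc'.
  have [us ->] := dec Hall lt.
  rewrite big_distrr /=; apply: big_ind; [exact: B0 | exact: BD |].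
  move=> [u v] _ /=.
  have [s1 ->] := CL v.
  exists ((e i * z * e t) * (e t * u * e i) * (e i * s1 * e i)), 0; split.
  + by apply: JnR; apply: JnR; apply: offdiag.
  + exact: Jn0.
  + by rewrite mulr0 addr0 !mulrA.
Qed.

Lemma dsum_mask S (Y : {ffun Q0 -> L}) (m : pred Q0) :
  dsum_mod e S Y -> dsum_mod e S [ffun s => if m s then Y s else 0].
Proof.
move=> HY s; rewrite ffunE; have := HY s; case: (s \in S) => H; case: (m s) => //.
by exists 0; rewrite mulr0.
Qed.

Lemma part3 i j p q (a : k) l (S : {set Q0}) :
  shortest_qpath src tgt p i j -> shortest_qpath src tgt q j i ->
  a != 0 -> in_corner_rad e i l ->
  (factors_through_dsum e j i (fun u => (a *: e i + l) * pimg p * u) S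
   <-> has (fun t => t \in S) (qverts q)).
Proof.
move=> Hp Hq Ha Hl.
have [HlJ Hll] := corner_rad_J Hl.
have [Hft _] := Hp; move: (Hft) => /and3P[Hvp /eqP Hp1 /eqP Hpe].
have [Hqft _] := Hq.
have HPl : e i * pimg p = pimg p by rewrite -Hp1 pimg_l.
have HPr : pimg p * e j = pimg p by rewrite -Hpe pimg_r.
have eil : e i * l = l by rewrite -Hll !mulrA eK.
have Hel : e i * (a *: e i + l) = a *: e i + l by rewrite mulrDr -scalerAr eK eil.
split.
- move=> [g [h [[Hg1 [Hg2 Hg3]] [[Hh1 [Hh2 Hh3]] Hf]]]].
  apply/idPn => /hasPn Hn.
  have Hej : proj_mod e j (e j) by exists (e j); rewrite eK.
  have HY : dsum_mod e S (g (e j)) := Hg1 _ Hej.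
  have HYj : forall t, g (e j) t = g (e j) t * e j.
    move=> t; have := Hg3 (e j) (e j) Hej; rewrite /ract eK => H.
    have := congr1 (fun F : {ffun Q0 -> L} => F t) H.
    by rewrite /dsum_act ffunE.
  have Hw := Hf _ Hej; rewrite /= -mulrA HPr in Hw.
  move: (g (e j)) HY HYj Hw => Y HY HYj Hw.
  have D0 : dsum_mod e S 0.
    by move=> s; rewrite ffunE; case: (s \in S) => //; exists 0; rewrite mulr0.
  have h0 : h 0 = 0.
    by apply: (addrI (h 0)); rewrite addr0 -Hh2 ?addr0.
  have Hsum : forall r, uniq r -> Bp p (h [ffun s => if s \in r then Y s else 0]).
    elim=> [|t r IH] /=.
      move=> _; have -> : [ffun s => if s \in [::] then Y s else 0] = 0.
        by apply/ffunP => s; rewrite !ffunE.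
      by rewrite h0; apply: B0.
    move=> /andP[Htr Hr].
    have -> : [ffun s => if s \in t :: r then Y s else 0] =
      [ffun s => if s == t then Y s else 0] + [ffun s => if s \in r then Y s else 0].
      apply/ffunP => s; rewrite !ffunE in_cons; case: (eqVneq s t) => [->|_] /=.
        by rewrite (negPf Htr) addr0.
      by rewrite add0r.
    rewrite Hh2; [|exact: dsum_mask|exact: dsum_mask].
    apply: BD (IH Hr).
    case: (boolP (t \in S)) => HtS; last first.
      have Yt0 : Y t = 0 by have := HY t; rewrite (negPf HtS).
      have -> : [ffun s => if s == t then Y s else 0] = 0.
        by apply/ffunP => s; rewrite !ffunE; case: eqP => // ->.
      by rewrite h0; apply: B0.
    have [lt Hlt] : proj_mod e t (Y t) by have := HY t; rewrite HtS.
    have Heps : dsum_mod e S [ffun s => if s == t then e t else 0].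
      move=> s; rewrite ffunE; case: eqP => [->|_].
        by rewrite HtS; exists (e t); rewrite eK.
      by case: (s \in S) => //; exists 0; rewrite mulr0.
    have -> : [ffun s => if s == t then Y s else 0] =
              dsum_act [ffun s => if s == t then e t else 0] (Y t).
      apply/ffunP => s; rewrite /dsum_act !ffunE; case: eqP => [->|_].
        by rewrite Hlt mulrA eK.
      by rewrite mul0r.
    rewrite Hh3 // /ract.
    have [z Hz] := Hh1 _ Heps.
    rewrite Hz HYj Hlt.
    have -> : e i * z * (e t * lt * e j) = (e i * z * e t) * (e t * lt * e j).
      by rewrite !mulrA eKr.
    apply: termB Hp _.
    apply/negP => Hr'.
    have Htq : t \in qverts q by apply: ivt_ft Hqft _; rewrite minnC maxnC.
    by have := Hn t Htq; rewrite HtS.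
  have := Hsum (enum Q0) (enum_uniq _).
  have -> : [ffun s => if s \in enum Q0 then Y s else 0] = Y.
    by apply/ffunP => s; rewrite ffunE mem_enum.
  move=> [s [r [Hs Hr HB]]].
  rewrite -Hw expl // in HB.
  have H' : a *: pimg p = (s - l) * pimg p + pimg p * r.
    by rewrite mulrBl -addrA [- _ + _]addrC addrA -HB addrK.
  have := Cc Hp; move/eqP; apply.
  by apply: (Kkey Ha _ Hr H'); apply: JnB.
- move=> /hasP [t Htq HtS].
  have Hr := sp_range Hq Htq.
  have Htp : t \in qverts p := ivt_ft Hft Hr.
  have [p1 [p2 [H1 H2 _ H4]]] := split_at Hvp Htp.
  rewrite Hp1 in H1; rewrite Hpe in H2.
  move: (H2) => /and3P[_ /eqP Hp21 _].
  exists (fun u => [ffun s => if s == t then pimg p2 * u else 0]).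
  exists (fun Y : {ffun Q0 -> L} => (a *: e i + l) * pimg p1 * Y t).
  split; [split; [|split] | split; [split; [|split]|]].
  + move=> u _ s; rewrite ffunE; case: (eqVneq s t) => [->|Hst].
      by rewrite HtS; exists (pimg p2 * u); rewrite mulrA -Hp21 pimg_l.
    by case: (s \in S) => //; exists 0; rewrite mulr0.
  + move=> u v _ _; apply/ffunP => s; rewrite !ffunE.
    by case: eqP => _; [rewrite mulrDr | rewrite addr0].
  + move=> u r _; apply/ffunP => s; rewrite /ract /dsum_act !ffunE.
    by case: eqP => _; [rewrite mulrA | rewrite mul0r].
  + move=> Y _; exists ((a *: e i + l) * pimg p1 * Y t).
    by rewrite !mulrA Hel.
  + by move=> Y Z _ _; rewrite ffunE mulrDr.
  + by move=> Y r _; rewrite /dsum_act /ract ffunE mulrA.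
  + by move=> u _ /=; rewrite ffunE eqxx H4 !mulrA.
Qed.

End Main.

Theorem lemma4p3 (k : closedFieldType) (Q0 Q1 : finType) (src tgt : Q1 -> Q0)
  (n : nat) (L : algType k) (e : Q0 -> L) (x : Q1 -> L) :
  is_presentation src tgt e x ->
  admissible_kernel src tgt e x ->
  cond_C src tgt e x n ->
  (* (1) *)
  (forall a : Q1, src a != tgt a ->
     forall y : L,
       (exists r, jacobson_rad r /\ y = e (src a) * r * x a) <->
       (exists r, jacobson_rad r /\ y = x a * r * e (tgt a)))
  /\
  (* (2) *)
  (forall (i j : Q0) (p : qpath Q0 Q1) (w : L),
     shortest_qpath src tgt p i j ->
     (exists l, w = e i * l * e j) ->
     exists a : k,
       (exists l, in_corner_rad e i l /\ w = (a *: e i + l) * path_img e x p) /\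
       (exists l', in_corner_rad e j l' /\ w = path_img e x p * (a *: e j + l')) /\
       (forall (b : k) l, in_corner_rad e i l ->
          w = (b *: e i + l) * path_img e x p -> b = a) /\
       (forall (b : k) l', in_corner_rad e j l' ->
          w = path_img e x p * (b *: e j + l') -> b = a))
  /\
  (* (3) *)
  (forall (i j : Q0) (p q : qpath Q0 Q1) (a : k) (l : L) (S : {set Q0}),
     shortest_qpath src tgt p i j ->
     shortest_qpath src tgt q j i ->
     a != 0 -> in_corner_rad e i l ->
     (factors_through_dsum e j i
        (fun u => (a *: e i + l) * path_img e x p * u) S
      <-> has (fun t => t \in S) (qpath_vertices tgt q))).
Proof.
move=> [eM [esum [xE surj]]] [[mm [mm_ge2 mm_zero]] adm2] [[sigma [tau [Hsig [Htau Hcomp]]]] [Hb Cc]].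
have Cb1 := fun a H => (Hb a H).1.
have Cb2 := fun a H => (Hb a H).2.
pose sg v := val (sigma v).
have sg_inj : injective sg.
  by move=> u v /val_inj; apply: bij_inj.
have sg_step : forall a, (sg (src a) <= (sg (tgt a)).+1 /\ sg (tgt a) <= (sg (src a)).+1)%N.
  move=> a; case: (eqVneq (src a) (tgt a)) => [->|Hne]; first by rewrite /sg; split; lia.
  have [H1 H2] := Hcomp (exist _ a Hne); rewrite /sg /= H1 H2 /stdA_src /stdA_tgt.
  by case: (tau _).2; split; lia.
split; [|split].
- by move=> a Ha y; exact: (part1 eM esum xE surj mm_zero adm2 Cb1 Cb2 Ha y).
- by move=> i j p w Hp Hw; exact: (part2 eM esum xE surj mm_ge2 mm_zero adm2 sg_inj sg_step Cb1 Cb2 Cc Hp Hw).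
- by move=> i j p q a l S Hp Hq Ha Hl; exact: (part3 eM esum xE surj mm_ge2 mm_zero adm2 sg_inj sg_step Cb1 Cb2 Cc S Hp Hq Ha Hl).
Qed.
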